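(* Let $A,B$ be real symmetric $4\times 4$ matrices defining quadrics $\mathcal A: X^TAX=0$, $\mathcal B: X^TBX=0$ in $\mathbb{PR}^3$ with $f(\lambda)=\det(\lambda A-B)$ not identically zero. If $f(\lambda)=0$ has one quadruple root with Segre characteristic $[4]$, then the index sequence is $\langle 2\,{\wr\wr\wr\wr}_{-}\,2\rangle$ or its equivalent form $\langle 2\,{\wr\wr\wr\wr}_{+}\,2\rangle$, and in this case the QSIC comprises a real line and a real space cubic curve tangent to each other at a real point.
   Context: $X=(x,y,z,w)^T$ homogeneous coordinates; QSIC $=\mathcal A\cap\mathcal B$. One may take $A$ nonsingular. Canonical form: for $A$ nonsingular there is a real invertible $Q$ with $Q^TAQ=\mathrm{diag}(\varepsilon_1E_1,\dots)$, $Q^TBQ=\mathrm{diag}(\varepsilon_1E_1J_1,\dots)$, $J_i$ the real Jordan blocks of $A^{-1}B$, $E_i$ anti-identity matrices of matching sizes, and for blocks of real eigenvalues $\varepsilon_i\in\{\pm1\}$ uniquely determined (the sign of $J_i$). Segre characteristic $[4]$: a single eigenvalue with a single $4\times4$ Jordan block. $\mathrm{Id}(\lambda)$ = number of positive eigenvalues of $\lambda A-B$. Index sequence $\langle s_0\sigma_1s_1\rangle$ for one real root: $s_0,s_1$ are the values of $\mathrm{Id}$ before and after the root and $\sigma_1$ is four copies of $\wr$ with subscript the sign of the block. Equivalence of sequences is induced by change of basis of the pencil (including $(A,B)\mapsto(-A,-B)$, which sends $s\mapsto 4-s$ and reverses signs). *)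

(* Defs.v *)
From HB Require Import structures.
From mathcomp Require Import all_boot all_order all_algebra.
From mathcomp Require Import reals.
From mathcomp Require Import polyorder polyrcf complex.
Set Implicit Arguments. Unset Strict Implicit. Unset Printing Implicit Defensive.
Import Order.TTheory GRing.Theory Num.Theory.
Local Open Scope ring_scope.

Section Defs.
Variable R : realType.

Definition pencil_poly (A B : 'M[R]_4) : {poly R} :=
  \det ('X *: map_mx polyC A - map_mx polyC B).

Definition pos_eig_count (M : 'M[R]_4) : nat :=
  \sum_(x <- rootsR (char_poly M) | 0 < x) \mu_x (char_poly M).

Definition Id (A B : 'M[R]_4) (l : R) : nat := pos_eig_count (l *: A - B).

Definition anti_id4 : 'M[R]_4 := \matrix_(i, j) ((i + j == 3)%N)%:R.

Definition jordan4 (l : R) : 'M[R]_4 :=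
  \matrix_(i, j) (if i == j then l else if (j == i.+1 :> nat) then 1 else 0).

(* Segre characteristic [4] at eigenvalue l: A^{-1}B is similar to a single
   4x4 Jordan block with eigenvalue l *)
Definition segre4 (A B : 'M[R]_4) (l : R) : Prop :=
  exists P : 'M[R]_4, P \in unitmx /\ invmx P *m (invmx A *m B) *m P = jordan4 l.

Definition toC (x : R) : R[i] := Complex x 0.
Definition mxC m n (M : 'M[R]_(m, n)) : 'M[R[i]]_(m, n) := map_mx toC M.

(* complex points (homogeneous coordinates, row vectors) of the QSIC *)
Definition qsic (A B : 'M[R]_4) (X : 'rV[R[i]]_4) : Prop :=
  X != 0 /\ X *m mxC A *m X^T = 0 /\ X *m mxC B *m X^T = 0.

Definition cubic_pt (K : comNzRingType) (s t : K) : 'rV[K]_4 :=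
  \row_(i < 4) (s ^+ (3 - i) * t ^+ i).
Definition cubic_ds (K : comNzRingType) (s t : K) : 'rV[K]_4 :=
  \row_(i < 4) ((3 - i)%:R * s ^+ (3 - i).-1 * t ^+ i).
Definition cubic_dt (K : comNzRingType) (s t : K) : 'rV[K]_4 :=
  \row_(i < 4) (i%:R * s ^+ (3 - i) * t ^+ i.-1).

Definition on_line (u w : 'rV[R]_4) (X : 'rV[R[i]]_4) : Prop :=
  exists a b : R[i], X = a *: mxC u + b *: mxC w.

Definition on_cubic (M : 'M[R]_4) (X : 'rV[R[i]]_4) : Prop :=
  exists s t : R[i], X = cubic_pt s t *m mxC M.

End Defs.

(* Main.v *)
Require Import Defs.
From HB Require Import structures.
From mathcomp Require Import all_boot all_order all_algebra.
From mathcomp Require Import reals.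
From mathcomp Require Import polyorder polyrcf complex.
From mathcomp Require Import spectral sesquilinear.
From mathcomp Require Import ring lra.
Import Order.TTheory GRing.Theory Num.Theory.
Local Open Scope ring_scope.
Set Implicit Arguments.
Section Main.
Variable R : realType.
Local Notation C := (R[i]).

Lemma conjE (z : C) : Num.conj_op z = conjc z.
Proof. by case: z. Qed.

Lemma toC_real (z : C) : z \is Num.real -> z = toC (complex.Re z).
Proof.
rewrite CrealE conjE; case: z => a b /= /eqP [] Hb.
rewrite /toC; congr Complex; lra.
Qed.

Lemma mxC_herm (M : 'M[R]_4) : M^T = M -> mxC M \is hermsymmx.
Proof.
move=> HM; apply/is_hermitianmxP; rewrite expr0 scale1r.
apply/matrixP => i j; rewrite !mxE conjE /toC /=.
rewrite oppr0; by rewrite -{1}HM mxE.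
Qed.

Lemma spectral_real (M : 'M[R]_4) : M^T = M ->
  exists (U : 'M[C]_4) (r : 'I_4 -> R), U \is unitarymx /\
    mxC M = invmx U *m diag_mx (\row_i toC (r i)) *m U.
Proof.
move=> HM; have Hh := mxC_herm HM.
have /orthomx_spectralP E := hermitian_normalmx Hh.
have Hr := hermitian_spectral_diag_real Hh.
exists (spectralmx (mxC M)), (fun i => complex.Re (spectral_diag (mxC M) 0 i)).
split; first exact: spectral_unitarymx.
rewrite {1}E; congr (_ *m _ *m _); congr diag_mx.
apply/rowP => i; rewrite mxE; apply: toC_real.
exact: (mxOverP Hr).
Qed.

Lemma char_poly_conj (F : fieldType) n (U D : 'M[F]_n) : U \in unitmx ->
  char_poly (invmx U *m D *m U) = char_poly D.
Proof.
move=> HU; rewrite /char_poly /char_poly_mx !map_mxM map_invmx.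
set Up := map_mx polyC U.
have HUp : Up \in unitmx by rewrite map_unitmx.
transitivity (\det (invmx Up *m ('X%:M - map_mx polyC D) *m Up)).
  congr (\det _); rewrite mulmxBr mulmxBl; congr (_ - _).
  by rewrite -mulmxA -scalar_mxC mulmxA mulVmx ?mul1mx.
rewrite !det_mulmx det_inv mulrAC mulVr ?mul1r //.
Qed.
Lemma char_poly_prod (M : 'M[R]_4) (U : 'M[C]_4) (r : 'I_4 -> R) :
  U \in unitmx -> mxC M = invmx U *m diag_mx (\row_i toC (r i)) *m U ->
  char_poly M = \prod_(i < 4) ('X - (r i)%:P).
Proof.
move=> HU E; apply: (@map_poly_inj _ _ (real_complex R)).
rewrite map_char_poly.
rewrite -[map_mx _ M]/(mxC M).
rewrite E char_poly_conj // char_poly_trig ?diag_mx_is_trig // rmorph_prod.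
by apply: eq_bigr => i _; rewrite !mxE eqxx mulr1n rmorphB /= map_polyX map_polyC.
Qed.

Lemma mu_prodX (I : Type) (s : seq I) (f : I -> R) x :
  \mu_x (\prod_(i <- s) ('X - (f i)%:P)) = \sum_(i <- s) nat_of_bool (f i == x).
Proof.
elim: s => [|a s IH]; first by rewrite !big_nil mu_polyC.
rewrite !big_cons mu_mul; last first.
  rewrite mulf_neq0 ?polyXsubC_eq0 //.
  by rewrite monic_neq0 // monic_prod // => i _; rewrite monicXsubC.
rewrite IH; have -> // : \mu_x ('X - (f a)%:P) = nat_of_bool (f a == x).
have [->|ne] := eqVneq (f a) x; first by rewrite mu_XsubC.
rewrite muNroot ?root_XsubC 1?eq_sym ?(negbTE ne) //.
Qed.

Lemma sum_uniq_pred (s : seq R) (a : R) :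
  uniq s -> a \in s -> \sum_(x <- s | 0 < x) nat_of_bool (a == x) = nat_of_bool (0 < a).
Proof.
move=> us ain; rewrite (big_rem a) //= eqxx.
rewrite big1_seq ?addn0; first by case: (0 < a).
move=> y /andP[_ yin]; apply/eqP; rewrite eqb0; apply/negP => /eqP ay.
by move: yin; rewrite -ay mem_rem_uniqF.
Qed.

Lemma pos_eig_count_prod (M : 'M[R]_4) (r : 'I_4 -> R) :
  char_poly M = \prod_(i < 4) ('X - (r i)%:P) ->
  pos_eig_count M = \sum_(i < 4) nat_of_bool (0 < r i).
Proof.
move=> Hc; rewrite /pos_eig_count Hc.
set p := \prod_(i < 4) _.
have p0 : p != 0 by rewrite monic_neq0 // monic_prod // => i _; rewrite monicXsubC.
under eq_bigr do rewrite mu_prodX.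
rewrite exchange_big /=; apply: eq_bigr => i _.
apply: sum_uniq_pred; first exact: uniq_roots.
have := roots_on_rootsR p0 (r i); rewrite /= => <-.
by rewrite /root /p horner_prod (bigD1 i) //= hornerXsubC subrr mul0r.
Qed.
Definition i0 : 'I_4 := @Ordinal 4 0 isT.
Definition i1 : 'I_4 := @Ordinal 4 1 isT.
Definition i2 : 'I_4 := @Ordinal 4 2 isT.
Definition i3 : 'I_4 := @Ordinal 4 3 isT.

Lemma sum4 (V : nmodType) (F : 'I_4 -> V) :
  \sum_(i < 4) F i = F i0 + F i1 + F i2 + F i3.
Proof.
rewrite !big_ord_recr big_ord0 /=. rewrite GRing.add0r.
by congr (F _ + F _ + F _ + F _); apply: val_inj.
Qed.


Lemma mxCM m n p (A : 'M[R]_(m, n)) (B : 'M[R]_(n, p)) :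
  mxC (A *m B) = mxC A *m mxC B.
Proof. exact: (@map_mxM _ _ (real_complex R) _ _ _ A B). Qed.

Lemma qf_expand (N : 'M[C]_4) (x : 'rV[C]_4) :
  (x *m N *m map_mx Num.conj_op x^T) 0 0 =
  \sum_j \sum_i x 0 i * N i j * Num.conj_op (x 0 j).
Proof.
rewrite mxE; apply: eq_bigr => j _; rewrite !mxE big_distrl.
by apply: eq_bigr => i _.
Qed.

Lemma toC_gt0 (x : R) : (0 < toC x) = (0 < x).
Proof. exact: (ltcR 0 x). Qed.

Lemma iso_contra (M Q K : 'M[R]_4) (U : 'M[C]_4) (r : 'I_4 -> R) (k : 'I_4) :
  Q \in unitmx -> U \is unitarymx ->
  mxC M = invmx U *m diag_mx (\row_i toC (r i)) *m U ->
  Q^T *m M *m Q = K ->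
  K i0 i0 = 0 -> K i0 i1 = 0 -> K i1 i0 = 0 -> K i1 i1 = 0 ->
  (forall i, i != k -> 0 < r i) -> False.
Proof.
move=> HQ HU E HK K00 K01 K10 K11 Hpos.
have HUu : U \in unitmx := unitarymx_unit HU.
set Qc := mxC Q^T.
have HQc : Qc \in unitmx.
  by rewrite /Qc -[mxC _]/(map_mx (real_complex R) Q^T) map_unitmx unitmx_tr.
have [G HGd] : exists G, G = Qc *m invmx U by eexists.
have HG : G \in unitmx by rewrite HGd unitmx_mul HQc unitmx_inv HUu.
pose a := if (G i1 k == 0) && (G i0 k == 0) then 1 else G i1 k.
pose b := if (G i1 k == 0) && (G i0 k == 0) then 0 else - G i0 k.
pose c : 'rV[C]_4 := \row_j (if j == i0 then a else if j == i1 then b else 0).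
have c0 : c != 0.
  apply/negP => /eqP /rowP Hc; have := Hc i0; have := Hc i1; rewrite !mxE /= /a /b.
  case: ifP => [_ _ /eqP|H]; first by rewrite oner_eq0.
  move=> /eqP; rewrite oppr_eq0 => /eqP h0 h1.
  by rewrite h0 h1 !eqxx in H.
have [y Hy] : exists y, y = c *m G by eexists.
have y0 : y != 0 by rewrite Hy mulmx_free_eq0 ?row_free_unit.
have yk : y 0 k = 0.
  rewrite Hy mxE sum4 !mxE /= /a /b.
  case: ifP => [/andP[/eqP -> /eqP ->]|_]; ring.
have Q1 : (c *m Qc *m mxC M *m map_mx Num.conj_op (c *m Qc)^T) 0 0 = 0.
  have -> : c *m Qc *m mxC M *m map_mx Num.conj_op (c *m Qc)^T =
            c *m mxC K *m map_mx Num.conj_op c^T.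
    rewrite -HK !mxCM trmx_mul map_mxM.
    have -> : map_mx Num.conj_op Qc^T = mxC Q.
      by apply/matrixP => i j; rewrite !mxE conjE /toC /= oppr0.
    by rewrite !mulmxA.
  rewrite qf_expand !sum4 !mxE /= K00 K01 K10 K11.
  rewrite (_ : toC 0 = 0) //; ring.
have cQ : c *m Qc = y *m U by rewrite Hy HGd mulmxA mulmxKV.
have Q2 : (c *m Qc *m mxC M *m map_mx Num.conj_op (c *m Qc)^T) 0 0 =
          \sum_i toC (r i) * (y 0 i * Num.conj_op (y 0 i)).
  rewrite cQ E trmx_mul map_mxM !mulmxA (mulmxK HUu).
  rewrite -(mulmxA _ U) (unitarymxP HU) mulmx1 mul_mx_diag mxE.
  by apply: eq_bigr => j _; rewrite !mxE [y 0 j * _]mulrC -mulrA.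
have Hsum : \sum_i toC (r i) * (y 0 i * Num.conj_op (y 0 i)) = 0 by rewrite -Q2 Q1.
have Hnn : forall i, predT i -> 0 <= toC (r i) * (y 0 i * Num.conj_op (y 0 i)).
  move=> i _; have [->|ik] := eqVneq i k; first by rewrite yk mul0r mulr0.
  by rewrite mulr_ge0 ?mul_conjC_ge0 // ltW // toC_gt0 Hpos.
have H0 := psumr_eq0P Hnn Hsum.
move/negP: y0; apply; apply/eqP/rowP => i; rewrite mxE.
have [->//|ik] := eqVneq i k.
have := H0 i isT; move/eqP; rewrite mulf_eq0 mul_conjC_eq0.
have : toC (r i) != 0 by rewrite gt_eqF // toC_gt0 Hpos.
by move=> /negbTE -> /= /eqP.
Qed.
Lemma ord4_ind (P : 'I_4 -> Prop) : P i0 -> P i1 -> P i2 -> P i3 -> forall i, P i.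
Proof.
move=> H0 H1 H2 H3 [[|[|[|[|n]]]] Hi] //.
- by rewrite (_ : Ordinal Hi = i0) //; apply: val_inj.
- by rewrite (_ : Ordinal Hi = i1) //; apply: val_inj.
- by rewrite (_ : Ordinal Hi = i2) //; apply: val_inj.
- by rewrite (_ : Ordinal Hi = i3) //; apply: val_inj.
Qed.

Ltac T := apply: ord4_ind => //; first [by move=> _ | by rewrite eqxx].

Lemma count_comb (r : 'I_4 -> R) :
  (forall i, r i != 0) ->
  (forall k, ~ (forall i, i != k -> 0 < r i)) ->
  (forall k, ~ (forall i, i != k -> r i < 0)) ->
  \sum_(i < 4) nat_of_bool (0 < r i) = 2%N.
Proof.
move=> nz Hp Hn.
have sg i : (r i < 0) || (0 < r i) by rewrite -neq_lt nz.
rewrite sum4.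
case/orP: (sg i0) => h0; case/orP: (sg i1) => h1;
case/orP: (sg i2) => h2; case/orP: (sg i3) => h3;
rewrite ?h0 ?h1 ?h2 ?h3 ?(lt_gtF h0) ?(lt_gtF h1) ?(lt_gtF h2) ?(lt_gtF h3) //;
exfalso;
first [ solve [apply: (Hp i0); T] | solve [apply: (Hp i1); T]
      | solve [apply: (Hp i2); T] | solve [apply: (Hp i3); T]
      | solve [apply: (Hn i0); T] | solve [apply: (Hn i1); T]
      | solve [apply: (Hn i2); T] | solve [apply: (Hn i3); T] ].
Qed.


Lemma count2 (M Q K : 'M[R]_4) : M^T = M -> \det M != 0 -> Q \in unitmx ->
  Q^T *m M *m Q = K ->
  K i0 i0 = 0 -> K i0 i1 = 0 -> K i1 i0 = 0 -> K i1 i1 = 0 ->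
  pos_eig_count M = 2%N.
Proof.
move=> HM dM HQ HK K00 K01 K10 K11.
have [U [r [HU E]]] := spectral_real HM.
have Hc := @char_poly_prod M U r (unitarymx_unit HU) E.
rewrite (@pos_eig_count_prod M r Hc); apply: count_comb.
- move=> i; apply/eqP => ri0; move/eqP: dM; apply.
  have : (char_poly M).[0] = 0.
    by rewrite Hc horner_prod (bigD1 i) //= hornerXsubC ri0 subrr mul0r.
  by rewrite horner_coef0 char_poly_det => /eqP; rewrite mulf_eq0 signr_eq0 /= => /eqP.
- by move=> k Hk; exact: (@iso_contra M Q K U r k HQ HU E HK K00 K01 K10 K11 Hk).
- move=> k Hk.
  apply: (@iso_contra (- M) Q (- K) U (fun i => - r i) k HQ HU).
  + rewrite -[mxC _]/(map_mx (real_complex R) (- M)) map_mxN.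
    rewrite -[map_mx _ M]/(mxC M) E.
    have -> : (\row_i toC (- r i)) = - \row_i toC (r i).
      by apply/rowP => i; rewrite !mxE /toC /=; simpc.
    by rewrite raddfN /= mulmxN mulNmx.
  + by rewrite mulmxN mulNmx HK.
  + by rewrite mxE K00 oppr0.
  + by rewrite mxE K01 oppr0.
  + by rewrite mxE K10 oppr0.
  + by rewrite mxE K11 oppr0.
  + by move=> i ik; rewrite oppr_gt0 Hk.
Qed.
Lemma EE : anti_id4 R *m anti_id4 R = 1%:M.
Proof.
apply/matrixP; apply: ord4_ind; apply: ord4_ind;
by rewrite !mxE sum4 !mxE /=; ring.
Qed.

Definition hank (h3 h4 h5 h6 : R) : 'M[R]_4 :=
  \matrix_(i, j) (if (i + j == 3)%N then h3 else if (i + j == 4)%N then h4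
     else if (i + j == 5)%N then h5 else if (i + j == 6)%N then h6 else 0).

Definition toep (t0 t1 t2 t3 : R) : 'M[R]_4 :=
  \matrix_(i, j) (if i == j then t0 else if (j == i.+1 :> nat) then t1
     else if (j == i.+2 :> nat) then t2 else if (j == i.+3 :> nat) then t3 else 0).

Ltac getall H :=
  have := H i0 i0; have := H i0 i1; have := H i0 i2; have := H i0 i3;
  have := H i1 i0; have := H i1 i1; have := H i1 i2; have := H i1 i3;
  have := H i2 i0; have := H i2 i1; have := H i2 i2; have := H i2 i3;
  have := H i3 i0; have := H i3 i1; have := H i3 i2; have := H i3 i3.

Lemma hank_of (A1 : 'M[R]_4) (l0 : R) : A1^T = A1 ->
  (A1 *m jordan4 l0)^T = A1 *m jordan4 l0 ->
  A1 = hank (A1 i0 i3) (A1 i1 i3) (A1 i2 i3) (A1 i3 i3).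
Proof.
move=> /matrixP HS /matrixP HJ.
have S i j : A1 j i = A1 i j by have := HS i j; rewrite mxE.
getall HJ; rewrite !mxE ?sum4 !mxE /=;
rewrite ?(S i0 i1) ?(S i0 i2) ?(S i0 i3) ?(S i1 i2) ?(S i1 i3) ?(S i2 i3).
move=> e1 e2 e3 e4 e5 e6 e7 e8 e9 e10 e11 e12 e13 e14 e15 e16.
apply/matrixP; apply: ord4_ind; apply: ord4_ind; rewrite !mxE /=;
rewrite ?(S i0 i1) ?(S i0 i2) ?(S i0 i3) ?(S i1 i2) ?(S i1 i3) ?(S i2 i3); lra.
Qed.

Lemma toep_cong (h3 h4 h5 h6 eps t0 : R) : h3 != 0 -> t0 != 0 -> h3 * t0 ^+ 2 = eps ->
  let t1 := - h4 * t0 / (2 * h3) in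
  let t2 := - (h5 * t0 ^+ 2 + 2 * h4 * t0 * t1 + h3 * t1 ^+ 2) / (2 * h3 * t0) in
  let t3 := - (h6 * t0 ^+ 2 + 2 * h5 * t0 * t1 + h4 * (t1 ^+ 2 + 2 * t0 * t2)
               + 2 * h3 * t1 * t2) / (2 * h3 * t0) in
  (toep t0 t1 t2 t3)^T *m hank h3 h4 h5 h6 *m toep t0 t1 t2 t3 = eps *: anti_id4 R.
Proof.
move=> h3n t0n He t1 t2 t3.
have two : (2 : R) != 0 by rewrite pnatr_eq0.
apply/matrixP; apply: ord4_ind; apply: ord4_ind;
rewrite !mxE ?sum4 !mxE ?sum4 !mxE /= -He /t3 /t2 /t1; field; rewrite ?h3n ?t0n ?two //.
Qed.
Lemma toep_J t0 t1 t2 t3 l0 :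
  toep t0 t1 t2 t3 *m jordan4 l0 = jordan4 l0 *m toep t0 t1 t2 t3.
Proof.
apply/matrixP; apply: ord4_ind; apply: ord4_ind;
by rewrite !mxE ?sum4 !mxE /=; ring.
Qed.

Lemma canon (A B : 'M[R]_4) (l0 : R) : A^T = A -> B^T = B -> A \in unitmx ->
  segre4 A B l0 ->
  exists eps Q, (eps = -1 \/ eps = 1) /\ Q \in unitmx /\
    Q^T *m A *m Q = eps *: anti_id4 R /\
    Q^T *m B *m Q = eps *: (anti_id4 R *m jordan4 l0).
Proof.
move=> HA HB HAu [P [HPu HPJ]].
set J := jordan4 l0.
set A1 := P^T *m A *m P.
have HB1 : P^T *m B *m P = A1 *m J.
  by rewrite /A1 /J -HPJ !mulmxA mulmxK // mulmxK.
have HA1s : A1^T = A1 by rewrite /A1 !trmx_mul trmxK HA mulmxA.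
have HA1J : (A1 *m J)^T = A1 *m J by rewrite -HB1 !trmx_mul trmxK HB mulmxA.
have HH := hank_of HA1s HA1J.
move: HH; set h3 := A1 i0 i3; set h4 := A1 i1 i3; set h5 := A1 i2 i3;
  set h6 := A1 i3 i3 => HH.
have HA1u : A1 \in unitmx by rewrite /A1 !unitmx_mul unitmx_tr HPu HAu.
have h3n : h3 != 0.
  apply/negP => /eqP h30.
  have : (delta_mx 0 i0 : 'rV[R]_4) *m A1 == 0.
    rewrite HH; apply/eqP/rowP; apply: ord4_ind;
    by rewrite !mxE sum4 !mxE /= ?h30; ring.
  rewrite mulmx_free_eq0 ?row_free_unit // => /eqP /rowP /(_ i0).
  by rewrite !mxE /= => /eqP; rewrite oner_eq0.
pose eps : R := if 0 < h3 then 1 else -1.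
pose t0 : R := (Num.sqrt `|h3|)^-1.
have Habs : 0 < `|h3| by rewrite normr_gt0.
have t0n : t0 != 0 by rewrite invr_eq0 sqrtr_eq0 -ltNge Habs.
have He : h3 * t0 ^+ 2 = eps.
  rewrite /t0 exprVn sqr_sqrtr ?ltW // /eps; case: ifP => h.
    by rewrite gtr0_norm // mulfV.
  rewrite ltr0_norm; last by rewrite lt_neqAle h3n /= leNgt h.
  by rewrite invrN mulrN mulfV.
have := @toep_cong h3 h4 h5 h6 eps t0 h3n t0n He => /=.
set T := toep _ _ _ _ => HT.
have HEu : anti_id4 R \in unitmx by case: (mulmx1_unit EE).
have epsn : eps != 0 by rewrite /eps; case: ifP => _; rewrite ?oppr_eq0 oner_eq0.
have HTu : T \in unitmx.
  have : T^T *m hank h3 h4 h5 h6 *m T \in unitmx by rewrite HT unitmxZ ?unitfE.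
  by rewrite unitmx_mul => /andP[].
exists eps, (P *m T); split; first by rewrite /eps; case: ifP; auto.
split; first by rewrite unitmx_mul HPu.
have QA : (P *m T)^T *m A *m (P *m T) = T^T *m A1 *m T.
  by rewrite trmx_mul /A1 !mulmxA.
split; first by rewrite QA HH.
have -> : (P *m T)^T *m B *m (P *m T) = T^T *m (P^T *m B *m P) *m T.
  by rewrite trmx_mul !mulmxA.
rewrite HB1 HH !mulmxA -(mulmxA _ J) /J -toep_J mulmxA HT.
by rewrite scalemxAl.
Qed.
End Main.
Set Implicit Arguments.
Section Q.
Variable R : realType.
Local Notation C := (R[i]).

Lemma toC0 : toC (0 : R) = 0. Proof. by []. Qed.
Lemma toC1 : toC (1 : R) = 1. Proof. by []. Qed.
Lemma toCN (x : R) : toC (- x) = - toC x. Proof. by rewrite /toC; simpc. Qed.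
Lemma toCn (n : nat) : toC (n%:R : R) = n%:R.
Proof. exact: (rmorph_nat (real_complex R) n). Qed.

Definition mk4 (a b c d : C) : 'rV[C]_4 :=
  \row_i (if i == i0 then a else if i == i1 then b else if i == i2 then c else d).

Lemma mk4E (Y : 'rV[C]_4) : Y = mk4 (Y 0 i0) (Y 0 i1) (Y 0 i2) (Y 0 i3).
Proof. by apply/rowP; apply: ord4_ind; rewrite !mxE. Qed.

Lemma fA_E (a b c d : C) :
  (mk4 a b c d *m mxC (anti_id4 R) *m (mk4 a b c d)^T) 0 0 = 2 * (a * d + b * c).
Proof. by rewrite !mxE !sum4 !mxE ?sum4 !mxE /= ?toC0 ?toC1; ring. Qed.

Lemma fB_E (l0 : R) (a b c d : C) :
  (mk4 a b c d *m mxC (anti_id4 R *m jordan4 l0) *m (mk4 a b c d)^T) 0 0 =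
  toC l0 * (2 * (a * d + b * c)) + (2 * b * d + c ^+ 2).
Proof.
rewrite mxCM.
by rewrite !mxE !sum4 !mxE ?sum4 !mxE ?sum4 !mxE /= ?toC0 ?toC1; ring.
Qed.

Definition Dm : 'M[R]_4 := \matrix_(i, j)
  (if (i == i3) && (j == i0) then 1 else if (i == i2) && (j == i1) then -1
   else if (i == i1) && (j == i2) then 2 else if (i == i0) && (j == i3) then 2 else 0).

Definition Dinv : 'M[R]_4 := \matrix_(i, j)
  (if (i == i0) && (j == i3) then 1 else if (i == i1) && (j == i2) then -1
   else if (i == i2) && (j == i1) then 2^-1 else if (i == i3) && (j == i0) then 2^-1 else 0).

Lemma Dm_unit : Dm \in unitmx.
Proof.
have two : (2 : R) != 0 by rewrite pnatr_eq0.
have : Dm *m Dinv = 1%:M.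
  apply/matrixP; apply: ord4_ind; apply: ord4_ind;
  by rewrite !mxE sum4 !mxE /=; field.
by case/mulmx1_unit.
Qed.

Lemma cubic_D (s t : C) :
  cubic_pt s t *m mxC Dm = mk4 (t ^+ 3) (- (s * t ^+ 2)) (2 * s ^+ 2 * t) (2 * s ^+ 3).
Proof.
apply/rowP; apply: ord4_ind;
by rewrite !mxE sum4 !mxE /= ?subSS ?subn0 /= ?toC0 ?toC1 ?toCN ?toC1 ?(toCn 2); ring.
Qed.

Lemma ds_D : cubic_ds (0 : R) 1 *m Dm = - delta_mx 0 i1.
Proof.
by apply/rowP; apply: ord4_ind; rewrite !mxE sum4 !mxE /= ?subSS ?subn0 /=; ring.
Qed.

Lemma dt_D : cubic_dt (0 : R) 1 *m Dm = 3 *: delta_mx 0 i0.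
Proof.
by apply/rowP; apply: ord4_ind; rewrite !mxE sum4 !mxE /= ?subSS ?subn0 /=; ring.
Qed.

Lemma mx11_eq0 (Z : 'M[C]_1) : (Z = 0) <-> (Z 0 0 = 0).
Proof.
split=> [->|H]; first by rewrite mxE.
by apply/matrixP => i j; rewrite !ord1 H mxE.
Qed.

Lemma form_change (Q G : 'M[R]_4) (c : R) (N : 'M[R]_4) (Y : 'rV[C]_4) :
  Q^T *m G *m Q = c *: N ->
  (Y *m mxC Q^T) *m mxC G *m (Y *m mxC Q^T)^T = toC c *: (Y *m mxC N *m Y^T).
Proof.
move=> H.
rewrite trmx_mul /mxC map_trmx trmxK -/(mxC Q) -/(mxC G) -/(mxC Q^T).
rewrite !mulmxA -(mulmxA Y) -(mulmxA Y) -!mxCM H.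
rewrite -[mxC (c *: N)]/(map_mx (real_complex R) (c *: N)) map_mxZ.
by rewrite -scalemxAr -scalemxAl.
Qed.

Lemma line_mk4 (a b : C) :
  a *: mxC (delta_mx 0 i0 : 'rV[R]_4) + b *: mxC (delta_mx 0 i1 : 'rV[R]_4) = mk4 a b 0 0.
Proof.
by apply/rowP; apply: ord4_ind; rewrite !mxE /= ?toC0 ?toC1 ?mulr0 ?mulr1 ?addr0 ?add0r.
Qed.

Lemma mk4_inj a b c d a' b' c' d' :
  a = a' -> b = b' -> c = c' -> d = d' -> mk4 a b c d = mk4 a' b' c' d'.
Proof. by move=> -> -> -> ->. Qed.

Lemma qsic_part (A B Q : 'M[R]_4) (eps l0 : R) : Q \in unitmx -> eps != 0 ->
  Q^T *m A *m Q = eps *: anti_id4 R ->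
  Q^T *m B *m Q = eps *: (anti_id4 R *m jordan4 l0) ->
  exists (u w : 'rV[R]_4) (M : 'M[R]_4) (s0 t0 : R),
     row_free (col_mx u w) /\ M \in unitmx /\ (s0, t0) != (0, 0) /\
     (forall X : 'rV[R[i]]_4,
        qsic A B X <-> X != 0 /\ (on_line u w X \/ on_cubic M X)) /\
     (col_mx u w == col_mx (cubic_ds s0 t0 *m M) (cubic_dt s0 t0 *m M))%MS.
Proof.
move=> HQu epsn HA HB.
exists (delta_mx 0 i0 *m Q^T), (delta_mx 0 i1 *m Q^T), (Dm *m Q^T), 0, 1.
have HQTu : Q^T \in unitmx by rewrite unitmx_tr.
split.
  apply/row_freeP; exists (invmx Q^T *m row_mx (delta_mx 0 i0)^T (delta_mx 0 i1)^T).
  rewrite -mul_col_mx mulmxA mulmxK // mul_col_row !trmx_delta !mul_delta_mx.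
  rewrite !mul_delta_mx_0 //.
  have d11 : (delta_mx 0 0 : 'M[R]_1) = 1%:M.
    by apply/matrixP => i j; rewrite !ord1 !mxE.
  by rewrite d11 -scalar_mx_block.
split; first by rewrite unitmx_mul Dm_unit.
split; first by rewrite xpair_eqE oner_eq0 andbF.
split; last first.
  rewrite !mulmxA ds_D dt_D mulNmx -scalemxAl.
  have three : (3 : R) != 0 by rewrite pnatr_eq0.
  set U := col_mx (delta_mx 0 i0 *m Q^T) (delta_mx 0 i1 *m Q^T).
  set L := col_mx (- (delta_mx 0 i1 *m Q^T)) (3 *: (delta_mx 0 i0 *m Q^T)).
  have E1 : U = col_mx (row_mx 0 (3^-1)%:M) (row_mx (-1)%:M 0) *m L.
    rewrite /L mul_col_mx !mul_row_col !mul0mx !mul_scalar_mx add0r addr0.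
    by rewrite scalerA mulVf // scale1r scaleN1r opprK.
  have E2 : L = col_mx (row_mx 0 (-1)%:M) (row_mx 3%:M 0) *m U.
    rewrite /U mul_col_mx !mul_row_col !mul0mx !mul_scalar_mx add0r addr0.
    by rewrite scaleN1r.
  apply/andP; split; [rewrite {1}E1 | rewrite {1}E2]; exact: submxMl.
move=> X.
set Qc := mxC Q^T.
have HQcu : Qc \in unitmx.
  by rewrite /Qc -[mxC _]/(map_mx (real_complex R) Q^T) map_unitmx.
set Y := X *m invmx Qc.
have XY : X = Y *m Qc by rewrite /Y mulmxKV.
have XZ (Z : 'rV[C]_4) : X = Z *m Qc <-> Y = Z.
  split=> [H|<-//]; by rewrite /Y H mulmxK.
have epsC : toC eps != 0.
  by apply: contra epsn => /eqP [] ->.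
have FA := @form_change Q A eps (anti_id4 R) Y HA.
have FB := @form_change Q B eps (anti_id4 R *m jordan4 l0) Y HB.
rewrite -XY in FA FB.
have Ymk := mk4E Y.
move: Ymk; set y0 := Y 0 i0; set y1 := Y 0 i1; set y2 := Y 0 i2; set y3 := Y 0 i3 => Ymk.
have fA : (X *m mxC A *m X^T = 0) <-> (y0 * y3 + y1 * y2 = 0).
  rewrite FA mx11_eq0 mxE Ymk fA_E.
  have two : (2 : C) != 0 by rewrite pnatr_eq0.
  split => [/eqP|H]; last by rewrite H !mulr0.
  by rewrite !mulf_eq0 (negbTE epsC) (negbTE two) /= => /eqP.
have fB : (X *m mxC B *m X^T = 0) <-> (toC l0 * (2 * (y0 * y3 + y1 * y2)) + (2 * y1 * y3 + y2 ^+ 2) = 0).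
  rewrite FB mx11_eq0 mxE Ymk fB_E.
  split => [/eqP|H]; last by rewrite H !mulr0.
  by rewrite !mulf_eq0 (negbTE epsC) /= => /eqP.
have online : on_line (delta_mx 0 i0 *m Q^T) (delta_mx 0 i1 *m Q^T) X <->
    exists a b, Y = mk4 a b 0 0.
  rewrite /on_line; split=> [[a [b Hab]]|[a [b Hab]]]; exists a, b.
    by apply/XZ; rewrite Hab !mxCM !scalemxAl -mulmxDl line_mk4.
  by rewrite XY Hab !mxCM !scalemxAl -mulmxDl line_mk4.
have oncub : on_cubic (Dm *m Q^T) X <->
    exists s t, Y = mk4 (t ^+ 3) (- (s * t ^+ 2)) (2 * s ^+ 2 * t) (2 * s ^+ 3).
  rewrite /on_cubic; split=> [[s [t Hst]]|[s [t Hst]]]; exists s, t.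
    by apply/XZ; rewrite Hst mxCM mulmxA cubic_D.
  by rewrite XY Hst mxCM mulmxA cubic_D.
rewrite online oncub /qsic fA fB.
split.
  move=> [Xn [hA hB]]; split=> //.
  rewrite hA !mulr0 add0r in hB.
  have [y30|y3n] := eqVneq y3 0.
    have y20 : y2 = 0.
      by apply/eqP; rewrite -sqrf_eq0; apply/eqP; rewrite -{1}hB y30; ring.
    left; exists y0, y1; rewrite Ymk y20 y30 //.
  right.
  pose s := 3.-root (y3 / 2).
  have two : (2 : C) != 0 by rewrite pnatr_eq0.
  have hs : s ^+ 3 = y3 / 2 by rewrite /s rootCK.
  have sn : s != 0.
    apply/negP => /eqP s0; move: hs; rewrite s0 expr0n /= => /esym /eqP.
    by rewrite mulf_eq0 invr_eq0 (negbTE two) (negbTE y3n).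
  have y3E : y3 = 2 * s ^+ 3 by rewrite hs; field.
  have y1E : y1 = - y2 ^+ 2 / (2 * y3).
    apply: (@mulIf _ (2 * y3)); first by rewrite mulf_neq0.
    rewrite mulfVK ?mulf_neq0 //.
    apply/eqP; rewrite -subr_eq0; apply/eqP; rewrite -hB; ring.
  have y0E : y0 = - y1 * y2 / y3.
    apply: (@mulIf _ y3) => //; rewrite mulfVK //.
    apply/eqP; rewrite -subr_eq0; apply/eqP; rewrite -hA; ring.
  exists s, (y2 / (2 * s ^+ 2)); rewrite Ymk; apply: mk4_inj.
  - by rewrite y0E y1E y3E; field.
  - by rewrite y1E y3E; field.
  - by field.
  - by [].
move=> [Xn [[a [b HY]]|[s [t HY]]]]; split=> //; rewrite /y0 /y1 /y2 /y3 HY !mxE /=; split; ring.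
Qed.
End Q.

Set Implicit Arguments.
Section M.
Variable R : realType.

Lemma pencil_horner (A B : 'M[R]_4) (l : R) :
  (pencil_poly A B).[l] = \det (l *: A - B).
Proof.
rewrite /pencil_poly -horner_evalE -det_map_mx; congr (\det _).
by apply/matrixP => i j; rewrite !mxE rmorphB rmorphM /= !horner_evalE hornerX !hornerC.
Qed.
End M.

Unset Implicit Arguments.
Theorem theorem12 (R : realType) (A B : 'M[R]_4) (l0 : R) :
  A^T = A -> B^T = B ->
  pencil_poly A B != 0 ->
  pencil_poly A B = \det A *: ('X - l0%:P) ^+ 4 ->
  segre4 A B l0 ->
  (* index sequence < 2 wr wr wr wr_eps 2 >, eps = - or + *)
  ((forall l, l < l0 -> Id A B l = 2%N) /\
   (forall l, l0 < l -> Id A B l = 2%N) /\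
   exists eps : R, (eps = -1 \/ eps = 1) /\
     exists Q : 'M[R]_4, Q \in unitmx /\
       Q^T *m A *m Q = eps *: anti_id4 R /\
       Q^T *m B *m Q = eps *: (anti_id4 R *m jordan4 l0)) /\
  (* QSIC = real line  U  real space cubic, tangent at a real point *)
  (exists (u w : 'rV[R]_4) (M : 'M[R]_4) (s0 t0 : R),
     row_free (col_mx u w) /\ M \in unitmx /\ (s0, t0) != (0, 0) /\
     (forall X : 'rV[R[i]]_4,
        qsic A B X <-> X != 0 /\ (on_line u w X \/ on_cubic M X)) /\
     (col_mx u w == col_mx (cubic_ds s0 t0 *m M) (cubic_dt s0 t0 *m M))%MS).
Proof.
move=> HA HB Hp0 Hp HS.
have dA : \det A != 0.
  by apply: contraNneq Hp0 => dA0; rewrite Hp dA0 scale0r.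
have HAu : A \in unitmx by rewrite unitmxE unitfE.
have [eps [Q [Heps [HQu [HQA HQB]]]]] := canon HA HB HAu HS.
have epsn : eps != 0 by case: Heps => ->; rewrite ?oppr_eq0 oner_eq0.
have Hdet l : l != l0 -> \det (l *: A - B) != 0.
  move=> hl; rewrite -pencil_horner Hp hornerZ horner_exp hornerXsubC.
  by rewrite mulf_neq0 // expf_neq0 // subr_eq0.
have HK l : Q^T *m (l *: A - B) *m Q = l *: (eps *: anti_id4 R) - eps *: (anti_id4 R *m jordan4 l0).
  by rewrite mulmxBr mulmxBl -scalemxAr -scalemxAl HQA HQB.
have Id2 l : l != l0 -> Id A B l = 2%N.
  move=> hl; rewrite /Id.
  apply: (@count2 R (l *: A - B) Q _ _ (Hdet l hl) HQu (HK l));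
    rewrite ?mxE ?sum4 ?mxE /=; try ring.
  by rewrite linearB /= linearZ /= HA HB.
split.
  split; first by move=> l hl; apply: Id2; rewrite lt_eqF.
  split; first by move=> l hl; apply: Id2; rewrite gt_eqF.
  by exists eps; split=> //; exists Q.
exact: (qsic_part HQu epsn HQA HQB).
Qed.
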